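(* Let $G$ be a finite group, let $p$ be a prime, and let $A$ be a subgroup of $G$ of maximum order among the self-centralizing subgroups of $G$ (i.e. among subgroups $B\le G$ with $C_G(B)=B$). Then: \begin{enumerate} \item If $G$ is abelian, then $\mathcal{CD}(G)=\{G\}$. \item If $|G:Z(G)|=p^2$, then $\mathcal{CD}(G)=\{Z(G),A,A_1,\dots,A_p,G\}$ is a quasi-antichain of width $p+1$, with each $A_i$ abelian. \item If $|G:A|=p$ and $|G:Z(G)|=p^i$ with $i>2$, then $\mathcal{CD}(G)=\{A\}$. Also, if $p$ is the smallest prime divisor of $|G|$, $|G:A|=p$ and $|G:Z(G)|>p^2$, then $\mathcal{CD}(G)=\{A\}$. \item Suppose $|G:A|=p^2$. \begin{enumerate} \item If $|G:Z(G)|=p^3$, then $\mathcal{CD}(G)=\{Z(G),G\}$. Also, if $p$ is the smallest prime divisor of $|G|$ and $p^2<|G:Z(G)|<p^4$, then $\mathcal{CD}(G)=\{Z(G),G\}$. \item If $|G:Z(G)|=p^4$, then $$\mathcal{CD}(G)=\{Z(G),Z(T_1),\dots,Z(T_n),A,A_1,\dots,A_m,T_1,\dots,T_n,G\},$$ where $T_1,\dots,T_n$ ($n\ge 0$) are all of the subgroups of index $p$ in $G$ whose centers have index $p^3$ in $G$, and $A_1,\dots,A_m$ ($m\ge 0$) are all of the subgroups of index $p^2$ in $G$, other than $A$, whose centralizers in $G$ have index $p^2$ in $G$. Furthermore, if $n\ge 1$ then $m\ge p$. \item If $|G:Z(G)|=p^i$ with $i>4$ and $G$ possesses a subgroup $T$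 of index $p$ in $G$ whose center has index $p^3$ in $G$, then $\mathcal{CD}(G)=\{Z(T),A,A_1,\dots,A_p,T\}$ is a quasi-antichain of width $p+1$, with each $A_i$ abelian. Also, if $p$ is the smallest prime divisor of $|G|$, $|G:Z(G)|>p^4$, and $G$ possesses a subgroup $T$ of index $p$ in $G$ whose center has index $p^3$ in $G$, then $\mathcal{CD}(G)=\{Z(T),A,A_1,\dots,A_p,T\}$ is a quasi-antichain of width $p+1$, with each $A_i$ abelian. \item If $|G:Z(G)|=p^i$ with $i>4$ and $G$ does not possess a subgroup of index $p$ in $G$ whose center has index $p^3$ in $G$, then $\mathcal{CD}(G)=\{A\}$. Also, if $p$ is the smallest prime divisor of $|G|$, $|G:Z(G)|>p^4$, and $G$ does not possess a subgroup of index $p$ in $G$ whose center has index $p^3$ in $G$, then $\mathcal{CD}(G)=\{A\}$. \end{enumerate} \end{enumerate}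
   Context: For a finite group $G$ and $H\le G$, the Chermak-Delgado measure is $m_G(H)=|H|\,|C_G(H)|$. Let $m^*(G)=\max\{m_G(H)\mid H\le G\}$ and $\mathcal{CD}(G)=\{H\le G\mid m_G(H)=m^*(G)\}$, the Chermak-Delgado lattice of $G$ (a sublattice of the subgroup lattice of $G$). A lattice is a quasi-antichain of width $w$ if it consists of a least element, a greatest element, and $w$ further pairwise incomparable elements. *)

(* Defs.v *)
From mathcomp Require Import all_boot all_fingroup all_solvable.
Set Implicit Arguments. Unset Strict Implicit. Unset Printing Implicit Defensive.
Local Open Scope group_scope.

Definition cdm (gT : finGroupType) (G H : {set gT}) : nat :=
  #|H| * #|'C_G(H)|.

Definition cdmax (gT : finGroupType) (G : {set gT}) : nat :=
  \max_(H : {group gT} | H \subset G) cdm G H.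

Definition CD (gT : finGroupType) (G : {set gT}) : {set {set gT}} :=
  [set H : {set gT} | [&& group_set H, H \subset G & cdm G H == cdmax G]].

Definition max_selfcent (gT : finGroupType) (G A : {group gT}) : Prop :=
  [/\ A \subset G, 'C_G(A) = A &
      forall B : {group gT}, B \subset G -> 'C_G(B) = B -> #|B| <= #|A|].

Definition quasi_antichain (T : finType) (L : {set {set T}}) (w : nat) : Prop :=
  exists bot top : {set T},
    [/\ bot \in L, top \in L, bot != top &
        (forall X, X \in L -> (bot \subset X) && (X \subset top))] /\
    #|L| = w + 2 /\
        (forall X Y, X \in L -> Y \in L ->
           X != bot -> X != top -> Y != bot -> Y != top ->
           X \subset Y -> X = Y).

Definition smallest_prime_div (p n : nat) : Prop :=
  [/\ prime p, p %| n & forall q, prime q -> q %| n -> p <= q].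

Definition Tsubs (gT : finGroupType) (G : {set gT}) (p : nat) : {set {set gT}} :=
  [set T : {set gT} | [&& group_set T, T \subset G, #|G : T| == p
                         & #|G : 'Z(T)| == (p ^ 3)%N]].

Definition Asubs (gT : finGroupType) (G A : {set gT}) (p : nat) : {set {set gT}} :=
  [set B : {set gT} | [&& group_set B, B \subset G, B != A,
                         #|G : B| == (p ^ 2)%N & #|G : 'C_G(B)| == (p ^ 2)%N]].

(* Main.v *)
Require Import Defs.
From mathcomp Require Import all_boot all_fingroup all_solvable.
From mathcomp Require Import zify ssralg ring.
Set Implicit Arguments. Unset Strict Implicit. Unset Printing Implicit Defensive.
Local Open Scope group_scope.

Lemma ar1 h a p w z : (h*a <= a*p*w -> w <= z -> 0 < a -> h <= p*z)%N.
Proof.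
move=> H1 H2 H3; rewrite -(leq_pmul2r H3); apply: leq_trans H1 _.
rewrite (_ : a*p*w = (p*w)*a)%N; last by ring.
by rewrite leq_mul2r leq_mul2l H2 !orbT.
Qed.

Lemma ar2 a p z : (p * z < a -> z * (a * p) < a * a)%N.
Proof.
move=> H; rewrite (_ : z * (a * p) = a * (p * z))%N; last by ring.
by rewrite ltn_mul2l H andbT; case: a H.
Qed.

Lemma ar3 a p z : (p * z < a -> a * p * z < a * a)%N.
Proof. by rewrite -mulnA; move=> H; rewrite ltn_mul2l H andbT; case: a H. Qed.

Lemma ar_count n x p : (n * (x * p - x) = x * p ^ 2 - x -> 0 < x -> 1 < p -> n = p.+1)%N.
Proof.
move=> e x0 p1.
have l1 : (x <= x * p)%N by rewrite leq_pmulr // ltnW.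
have l2 : (x * p <= x * p * p)%N by rewrite leq_pmulr // ltnW.
have e2 : ((x * p - x) * p.+1 = x * p ^ 2 - x)%N.
  rewrite mulnSr mulnBl (expnS p 1) expn1 mulnA; lia.
have pos : (0 < x * p - x)%N.
  rewrite subn_gt0 -{1}[x]muln1 ltn_mul2l x0 /=; done.
apply/eqP; rewrite -(eqn_pmul2r pos) [(p.+1 * _)%N]mulnC e2 e //.
Qed.

Lemma p_sq p : (1 < p -> 1 < p ^ 2 /\ p < p ^ 2)%N.
Proof.
move=> p1; rewrite (expnS p 1) expn1.
have : (p < p * p)%N by rewrite -{1}[p]muln1 ltn_mul2l p1 andbT ltnW.
by move=> h; split=> //; apply: ltn_trans h.
Qed.

Lemma eq_prod a b c d : (c <= a -> d <= b -> a * b = c * d -> 0 < c -> 0 < d ->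
  a = c /\ b = d)%N.
Proof.
move=> ca db e c0 d0.
have ac : a = c.
  apply/eqP; rewrite eqn_leq ca andbT leqNgt; apply/negP => lt.
  have : (c * d < a * b)%N.
    apply: (@leq_ltn_trans (c * b)); first by rewrite leq_pmul2l.
    by rewrite ltn_pmul2r // (leq_trans d0 db).
  by rewrite e ltnn.
split=> //; apply/eqP; by rewrite -(eqn_pmul2l c0) -{1}ac e.
Qed.

Lemma sq_eq h q : (q <= h -> h * h = q * q -> 0 < q -> h = q)%N.
Proof. by move=> qh e q0; case: (eq_prod qh qh e q0 q0). Qed.

Section CDL.
Variable gT : finGroupType.
Implicit Types G H K X Y B : {group gT}.

Lemma cdm_le G H : H \subset G -> cdm G H <= cdmax G.
Proof.
move=> sHG.
exact: (@leq_bigmax_cond _ (fun H : {group gT} => H \subset G) (fun H : {group gT} => cdm G H) H).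
Qed.

Lemma cdmax_eq G M : (forall H : {group gT}, H \subset G -> cdm G H <= M) ->
  (exists2 H : {group gT}, H \subset G & cdm G H = M) -> cdmax G = M.
Proof.
move=> hle [H sHG eH]; apply/eqP; rewrite eqn_leq; apply/andP; split.
  by apply/bigmax_leqP => K; apply: hle.
by rewrite -eH cdm_le.
Qed.

Lemma CD_ext G (L : {set {set gT}}) :
  (forall H : {group gT}, H \subset G -> (cdm G H == cdmax G) = ((H : {set gT}) \in L)) ->
  (forall X : {set gT}, X \in L -> group_set X && (X \subset G)) -> CD G = L.
Proof.
move=> hP hL; apply/setP => X; rewrite inE.
case gX: (group_set X) => /=; last first.
  by symmetry; apply/negbTE; apply/negP => /hL; rewrite gX.
case sXG: (X \subset G) => /=; last first.
  by symmetry; apply/negbTE; apply/negP => /hL; rewrite sXG andbF.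
exact: (hP (Group gX) sXG).
Qed.

Lemma CD_mem G H : H \subset G -> ((H : {set gT}) \in CD G) = (cdm G H == cdmax G).
Proof. by move=> sHG; rewrite inE groupP sHG. Qed.

Lemma centG_join_Z G H : 'C_G(H <*> 'Z(G)) = 'C_G(H).
Proof.
rewrite centY; apply/setP => x; rewrite !inE.
case xG: (x \in G) => //=; case: (x \in 'C(H)) => //=.
apply/centP => y /setIP [yG /centP yc]; apply/esym; exact: yc.
Qed.

Lemma cdm_Z G H : H \subset G -> ~~ ('Z(G) \subset H) ->
  cdm G H < cdm G (H <*> 'Z(G)).
Proof.
move=> sHG nZH; rewrite /cdm centG_join_Z ltn_pmul2r ?cardG_gt0 //.
apply: proper_card; rewrite properEneq joing_subl andbT.
apply/eqP => eH; move: nZH; rewrite eH; by rewrite joing_subr.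
Qed.

Lemma CD_Z G H : H \subset G -> cdm G H = cdmax G -> 'Z(G) \subset H.
Proof.
move=> sHG eH; apply/negPn/negP => nZ.
have := cdm_Z sHG nZ; rewrite eH ltnNge cdm_le //.
by rewrite join_subG sHG center_sub.
Qed.

Lemma cdm_meet_join G H K : H \subset G -> K \subset G ->
  cdm G H * cdm G K <= cdm G (H :&: K) * cdm G (H <*> K).
Proof.
move=> sHG sKG; rewrite /cdm.
have eCJ : 'C_G(H <*> K) = 'C_G(H) :&: 'C_G(K).
  rewrite centY; apply/setP => x; rewrite !inE; by case: (x \in G).
have h1 := mul_cardG H K.
have h2 := mul_cardG 'C_G(H) 'C_G(K).
have l1 : #|H * K| <= #|H <*> K|.
  by apply: subset_leq_card; apply: mul_subG; [apply: joing_subl| apply: joing_subr].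
have l2 : #|'C_G(H) * 'C_G(K)| <= #|'C_G(H :&: K)|.
  by apply: subset_leq_card; apply: mul_subG; apply: setIS; apply: centS;
     [apply: subsetIl | apply: subsetIr].
rewrite eCJ.
have -> : (#|H| * #|'C_G(H)| * (#|K| * #|'C_G(K)|) =
          (#|H| * #|K|) * (#|'C_G(H)| * #|'C_G(K)|))%N by rewrite mulnACA.
rewrite h1 h2.
have -> : (#|H :&: K| * #|'C_G(H :&: K)| * (#|H <*> K| * #|'C_G(H) :&: 'C_G(K)|)
  = (#|H <*> K| * #|H :&: K|) * (#|'C_G(H :&: K)| * #|'C_G(H) :&: 'C_G(K)|))%N.
  by nia.
by apply: leq_mul; rewrite leq_mul2r ?l1 ?l2 ?orbT.
Qed.


Lemma prime_idx_max G X Y : X \subset Y -> Y \subset G -> prime #|G : X| ->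
  (Y :=: X) \/ (Y :=: G).
Proof.
move=> sXY sYG pr.
have e := Lagrange_index sYG sXY.
have : #|G : Y| %| #|G : X| by rewrite -e dvdn_mulr.
case/primeP: pr => _ /[apply] /orP [/eqP h1 | /eqP h2].
  by right; apply/eqP; rewrite eqEsubset sYG -indexg_eq1 h1.
left; apply/eqP; rewrite eqEsubset sXY andbT -indexg_eq1.
move: e; rewrite h2 -{2}[#|G : X|]muln1 => /eqP; rewrite eqn_mul2l.
by case/orP => [/eqP h0 | /eqP ->]; first by move: (indexg_gt0 G X); rewrite h0.
Qed.

Lemma abelian_le G A B : max_selfcent G A -> B \subset G -> abelian B -> #|B| <= #|A|.
Proof.
case=> sAG cA maxA sBG aB.
pose P := fun X : {group gT} => (X \subset G) && abelian X.
have PB : P B by rewrite /P sBG aB.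
have [M mM sBM] := maxgroup_exists PB.
have [/andP [sMG aM] mx] := maxgroupP mM.
have cM : 'C_G(M) = M.
  apply/eqP; rewrite eqEsubset; apply/andP; split; last by rewrite subsetI sMG.
  apply/subsetP => x /setIP [xG xC].
  have PJ : P (M <*> <[x]>)%G.
    rewrite /P /= join_subG sMG cycle_subG xG /= abelianY aM cycle_abelian /=.
    by rewrite cycle_subG.
  have := mx _ PJ (joing_subl _ _) => eJ.
  have : x \in (M <*> <[x]>)%G by rewrite /= mem_gen // inE cycle_id orbT.
  by rewrite eJ.
apply: leq_trans (subset_leq_card sBM) _.
exact: maxA.
Qed.

Section U.
Variables (G : {group gT}) (p : nat).
Hypothesis pr_p : prime p.
Hypothesis hU : forall q, prime q -> q %| #|G : 'Z(G)| -> p <= q.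

Lemma U_ge d : d %| #|G : 'Z(G)| -> d = 1%N \/ p <= d.
Proof.
move=> dd; have d0 : 0 < d := dvdn_gt0 (indexg_gt0 _ _) dd.
case: (ltngtP d 1) => [| lt1 | -> ]; [lia | right | by left].
apply: leq_trans (pdiv_leq d0).
apply: hU; first exact: pdiv_prime.
exact: dvdn_trans (pdiv_dvd d) dd.
Qed.

Lemma U_prime d : d %| #|G : 'Z(G)| -> 1 < d -> d < p ^ 2 -> prime d.
Proof.
move=> dd lt1 ltp.
have q_pr := pdiv_prime lt1.
have e := divnK (pdiv_dvd d).
have d2 : d %/ pdiv d %| #|G : 'Z(G)|.
  by apply: dvdn_trans dd; apply/dvdnP; exists (pdiv d); rewrite mulnC e.
have hq : p <= pdiv d.
  by apply: hU => //; exact: dvdn_trans (pdiv_dvd d) dd.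
case: (U_ge d2) => [h1 | h2].
  by move: e; rewrite h1 mul1n => <-.
have : (p * p <= d)%N by rewrite -e leq_mul.
by move: ltp; rewrite (expnS p 1) expn1; lia.
Qed.

Lemma idx_dvd X Y : 'Z(G) \subset X -> X \subset Y -> Y \subset G ->
  #|Y : X| %| #|G : 'Z(G)|.
Proof.
move=> sZX sXY sYG.
have e1 := Lagrange_index sYG sXY.
have e2 := Lagrange_index (subset_trans sXY sYG) sZX.
by rewrite -e2 -e1 dvdn_mulr // dvdn_mull.
Qed.

Lemma idx_ge X Y : 'Z(G) \subset X -> X \subset Y -> Y \subset G ->
  ~~ (Y \subset X) -> p <= #|Y : X|.
Proof.
move=> sZX sXY sYG nYX.
case: (U_ge (idx_dvd sZX sXY sYG)) => // /eqP.
by rewrite indexg_eq1 (negbTE nYX).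
Qed.

Lemma Z_sub_center X : 'Z(G) \subset X -> X \subset G -> 'Z(G) \subset 'Z(X).
Proof.
move=> sZX sXG; rewrite subsetI sZX /=.
apply: subset_trans (centS sXG); exact: subsetIr.
Qed.

Lemma small_center_abelian X : 'Z(G) \subset X -> X \subset G ->
  #|X : 'Z(X)| < p ^ 2 -> abelian X.
Proof.
move=> sZX sXG lt.
have sZZ := Z_sub_center sZX sXG.
have dd := idx_dvd sZZ (center_sub X) sXG.
case: (ltngtP #|X : 'Z(X)| 1) => [| gt1 | e1].
- by move: (indexg_gt0 X (center X)); lia.
- apply: cyclic_center_factor_abelian; apply: prime_cyclic.
  rewrite card_quotient ?normal_norm ?center_normal //.
  exact: U_prime.
- move/eqP: e1; rewrite indexg_eq1 => sXZ.
  by rewrite abelianE (subset_trans sXZ) // subsetIr.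
Qed.

Lemma NA X : 'Z(G) \subset X -> X \subset G -> ~~ abelian X -> p ^ 2 <= #|X : 'Z(X)|.
Proof.
move=> sZX sXG nA; rewrite leqNgt; apply/negP => lt.
by move: nA; rewrite small_center_abelian.
Qed.

End U.


Lemma part1 G : abelian G -> CD G = [set (G : {set gT})].
Proof.
move=> aG.
have cH : forall H : {group gT}, H \subset G -> 'C_G(H) = G.
  by move=> H sHG; apply/setIidPl; exact: sub_abelian_cent.
have mx : cdmax G = (#|G| * #|G|)%N.
  apply: cdmax_eq; last by exists G => //; rewrite /cdm cH.
  by move=> H sHG; rewrite /cdm cH // leq_mul2r subset_leq_card ?orbT.
apply: CD_ext => [H sHG|X]; last by rewrite inE => /eqP ->; rewrite groupP subxx.
rewrite inE mx /cdm cH // eqn_mul2r eqEcard sHG /=.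
have g0 := cardG_gt0 G; rewrite (gtn_eqF g0) /=.
apply/eqP/idP => [->//|le]; apply/eqP; by rewrite eqn_leq le subset_leq_card.
Qed.


Lemma card_mulI G H K : H \subset G -> K \subset G ->
  (#|H| * #|K| <= #|G| * #|H :&: K|)%N.
Proof.
move=> sHG sKG; rewrite mul_cardG leq_mul2r subset_leq_card ?orbT //.
exact: mul_subG.
Qed.

Lemma selfcent_facts G A : max_selfcent G A ->
  [/\ A \subset G, 'C_G(A) = A, abelian A & 'Z(G) \subset A].
Proof.
case=> sAG cA _; split => //.
  by rewrite abelianE -{1}cA subsetIr.
by rewrite -cA setIS // centS.
Qed.

Lemma sub_Z G H : H \subset G -> G \subset 'C(H) -> H \subset 'Z(G).
Proof. by move=> sHG cGH; rewrite subsetI sHG centsC. Qed.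

Lemma part3 G A p : prime p -> max_selfcent G A -> #|G : A| = p ->
  (p ^ 2 < #|G : 'Z(G)|)%N -> CD G = [set (A : {set gT})].
Proof.
move=> pr_p msA iA ltZ.
have [sAG cA aA sZA] := selfcent_facts msA.
have eG : #|G| = (#|A| * p)%N by rewrite -iA Lagrange.
have eGZ := Lagrange_index sAG sZA; rewrite iA in eGZ.
have eA := Lagrange sZA.
have eGz := Lagrange (center_sub G).
have p1 := prime_gt1 pr_p.
have key : (p * #|'Z(G)| < #|A|)%N.
  have : (p < #|A : 'Z(G)|)%N.
    by move: ltZ; rewrite -eGZ (expnS p 1) expn1 ltn_mul2l; case/andP.
  by rewrite -eA mulnC ltn_mul2l cardG_gt0.
have z0 := cardG_gt0 'Z(G).
have prA : prime #|G : A| by rewrite iA.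
have bnd : forall H : {group gT}, H \subset G -> H :!=: A ->
    (cdm G H < #|A| * #|A|)%N.
  move=> H sHG nHA; rewrite /cdm.
  case sHA: (H \subset A).
    have sAC : A \subset 'C_G(H) by rewrite subsetI sAG sub_abelian_cent.
    have [eC|eC] := prime_idx_max sAC (subsetIl G _) prA.
      rewrite eC ltn_mul2r cardG_gt0 /=; apply: proper_card.
      by rewrite properEneq sHA andbT.
    have sHZ : H \subset 'Z(G) by rewrite sub_Z // -{1}eC subsetIr.
    have := subset_leq_card sHZ; rewrite eC => le.
    apply: (@leq_ltn_trans (#|'Z(G)| * #|G|)); first by rewrite leq_mul2r le orbT.
    by rewrite eG ar2.
  have sJ : A <*> H \subset G by rewrite join_subG sAG sHG.
  have eJ : (A <*> H)%G :=: G.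
    have [e|//] := prime_idx_max (joing_subl A H) sJ prA.
    by move: sHA; rewrite -e /= joing_subr.
  have sACZ : A :&: 'C_G(H) \subset 'Z(G).
    apply/subsetP => x /setIP [xA /setIP [xG xC]].
    rewrite inE xG -eJ /= centY inE xC andbT.
    by move/subsetP: aA => /(_ x xA).
  case sCA: ('C_G(H) \subset A).
    have sCZ : 'C_G(H) \subset 'Z(G) by rewrite -(setIidPr sCA).
    have l1 := subset_leq_card sCZ; have l2 := subset_leq_card sHG.
    apply: (@leq_ltn_trans (#|G| * #|'Z(G)|)); first exact: leq_mul.
    by rewrite eG ar3.
  have sJ2 : A <*> 'C_G(H) \subset G by rewrite join_subG sAG subsetIl.
  have eJ2 : (A <*> 'C_G(H))%G :=: G.
    have [e|//] := prime_idx_max (joing_subl A 'C_G(H)) sJ2 prA.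
    by move: sCA; rewrite -e /= joing_subr.
  have sHAZ : H :&: A \subset 'Z(G).
    apply/subsetP => x /setIP [xH xA].
    rewrite inE (subsetP sHG x xH) -eJ2 /= centY inE.
    rewrite (subsetP aA x xA) /=.
    apply/centP => y /setIP [yG /centP yc]; apply/esym; exact: yc.
  have l1 := card_mulI sHG sAG; have l2 := card_mulI (subsetIl G 'C(H)) sAG.
  have l3 := subset_leq_card sHAZ.
  have l4 : (#|'C_G(H) :&: A| <= #|'Z(G)|)%N by rewrite setIC subset_leq_card.
  rewrite eG in l1 l2.
  have h1 : (#|H| <= p * #|'Z(G)|)%N by apply: ar1 l1 l3 (cardG_gt0 A).
  have h2 : (#|'C_G(H)| <= p * #|'Z(G)|)%N by apply: ar1 l2 l4 (cardG_gt0 A).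
  apply: leq_ltn_trans (leq_mul h1 h2) _; exact: ltn_mul.
have cdA : cdm G A = (#|A| * #|A|)%N by rewrite /cdm cA.
have mx : cdmax G = (#|A| * #|A|)%N.
  apply: cdmax_eq; last by exists A.
  move=> H sHG; case: (eqVneq (H : {set gT}) A) => [e|ne]; first by rewrite /cdm e cA.
  exact: ltnW (bnd H sHG ne).
apply: CD_ext => [H sHG|X]; last by rewrite inE => /eqP ->; rewrite groupP sAG.
rewrite inE mx; case: (eqVneq (H : {set gT}) A) => [e|ne].
  by rewrite /cdm e cA eqxx.
apply/negbTE; by rewrite neq_ltn bnd.
Qed.


Definition midS (X Y : {set gT}) (p : nat) : {set {set gT}} :=
  [set B : {set gT} | [&& group_set B, X \subset B, B \subset Y & #|Y : B| == p]].

Lemma ar_p2 p a b : prime p -> (a * b = p ^ 2)%N -> a != 1%N -> b != 1%N ->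
  a = p /\ b = p.
Proof.
move=> pr e na nb.
have : a %| p ^ 2 by rewrite -e dvdn_mulr.
case/(dvdn_pfactor _ _ pr) => m le ea.
have p0 := prime_gt0 pr.
case: m le ea => [|[|[|m]]] //= _ ea.
- by move: na; rewrite ea expn0.
- by rewrite ea expn1; split=> //; move: e; rewrite ea expn1 (expnS p 1) expn1 => /eqP;
     rewrite eqn_pmul2l // => /eqP.
- move: e nb; rewrite ea => /eqP; rewrite -{2}[(p ^ 2)%N]muln1 eqn_pmul2l ?expn_gt0 ?p0 //.
  by move=> /eqP ->.
Qed.

Section Count.
Variables (X Y : {group gT}) (p : nat).
Hypotheses (pr_p : prime p) (sXZ : X \subset 'Z(Y)) (iYX : #|Y : X| = (p ^ 2)%N)
  (nAY : ~~ abelian Y).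

Let By y := (X <*> <[y]>)%G.

Let sXY : X \subset Y. Proof. exact: subset_trans sXZ (center_sub Y). Qed.

Let aX : abelian X. Proof. exact: abelianS sXZ (center_abelian Y). Qed.

Let cYX : Y \subset 'C(X).
Proof. by rewrite centsC (subset_trans sXZ) // subsetIr. Qed.

Lemma By_ab y : y \in Y -> abelian (By y).
Proof.
move=> yY; rewrite /= abelianY aX cycle_abelian /= cycle_subG.
exact: (subsetP cYX).
Qed.

Lemma By_sub y : y \in Y -> By y \subset Y.
Proof. by move=> yY; rewrite /= join_subG sXY cycle_subG. Qed.

Lemma By_mem y : y \in By y.
Proof. by rewrite /= mem_gen // inE cycle_id orbT. Qed.

Lemma By_idx y : y \in Y :\: X -> #|Y : By y| = p /\ #|By y : X| = p.
Proof.
case/setDP => yY nyX.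
apply: ar_p2 => //.
- by rewrite Lagrange_index ?By_sub // joing_subl.
- rewrite indexg_eq1; apply/negP => sYB.
  have eB : (By y : {set gT}) = Y by apply/eqP; rewrite eqEsubset sYB By_sub.
  by move: nAY; rewrite -eB By_ab.
- rewrite indexg_eq1; apply/negP => sBX.
  by move: nyX; rewrite (subsetP sBX) // By_mem.
Qed.

Lemma p_gt1 : (1 < p)%N. Proof. exact: prime_gt1. Qed.

Lemma mid_char (B : {group gT}) : X \subset B -> B \subset Y ->
  (B : {set gT}) != X -> (B : {set gT}) != Y ->
  #|Y : B| = p /\ exists2 y, y \in Y :\: X & (B : {set gT}) = By y.
Proof.
move=> sXB sBY nBX nBY.
have nsBX : ~~ (B \subset X).
  by apply: contra nBX => sBX; rewrite eqEsubset sBX sXB.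
have [y yB nyX] := subsetPn nsBX.
have yD : y \in Y :\: X by rewrite inE nyX (subsetP sBY).
have [i1 _] := By_idx yD.
have sByB : By y \subset B by rewrite /= join_subG sXB cycle_subG.
have pri : prime #|Y : By y| by rewrite i1.
have [e|e] := prime_idx_max sByB sBY pri.
  by split; [rewrite e i1 | exists y].
by move: nBY; rewrite e eqxx.
Qed.

Lemma midS_mem (B : {set gT}) : B \in midS X Y p ->
  group_set B /\ exists2 y, y \in Y :\: X & B = By y.
Proof.
rewrite inE => /and4P [gB sXB sBY /eqP iB]; split=> //.
have p1 := p_gt1.
have nBX : (Group gB : {set gT}) != X.
  apply/eqP => e; move: iB; rewrite -[B]/(gval (Group gB)) e iYX => ep.
  move: ep; rewrite (expnS p 1) expn1 -{3}[p]muln1 => /eqP.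
  by rewrite eqn_pmul2l ?prime_gt0 // => /eqP e1; move: p1; rewrite e1.
have nBY : (Group gB : {set gT}) != Y.
  apply/eqP => e; move: iB; rewrite -[B]/(gval (Group gB)) e indexgg => ep.
  by move: p1; rewrite -ep.
by have [_ [y yD eB]] := @mid_char (Group gB) sXB sBY nBX nBY; exists y.
Qed.

Lemma By_midS y : y \in Y :\: X -> (By y : {set gT}) \in midS X Y p.
Proof.
move=> yD; have [i1 _] := By_idx yD.
rewrite inE groupP /= joing_subl By_sub ?i1 ?eqxx //.
by case/setDP: yD.
Qed.

Lemma midS_ab (B : {set gT}) : B \in midS X Y p -> abelian B.
Proof.
case/midS_mem => _ [y yD ->]; apply: By_ab; by case/setDP: yD.
Qed.

Lemma midS_card_el (B : {set gT}) : B \in midS X Y p -> #|B| = (#|X| * p)%N.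
Proof.
case/midS_mem => _ [y yD ->]; have [i1 i2] := By_idx yD.
by rewrite -(Lagrange (joing_subl X <[y]>)) i2.
Qed.

Lemma midS_card : #|midS X Y p| = p.+1.
Proof.
have part : #|Y :\: X| = (\sum_(B in midS X Y p) #|B :\: X|)%N.
  rewrite -sum1_card (partition_big (fun y => By y : {set gT}) (mem (midS X Y p))) /=;
    last by move=> y yD; exact: By_midS.
  apply: eq_bigr => B BS; rewrite -sum1_card; apply: eq_bigl => y /=.
  have [gB [y0 y0D eB]] := midS_mem BS.
  have [i1 _] := By_idx y0D.
  apply/andP/idP => [[yD /eqP <-] | /setDP [yB nyX]].
    by apply/setDP; split; [exact: By_mem | case/setDP: yD].
  have sBY : B \subset Y by rewrite eB By_sub //; case/setDP: y0D.
  have yD : y \in Y :\: X by rewrite inE nyX (subsetP sBY).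
  split=> //; have [j1 _] := By_idx yD.
  have sBB : By y \subset B by rewrite eB /= join_subG joing_subl cycle_subG -eB.
  rewrite eqEcard sBB /=.
  have := Lagrange (By_sub (subsetP sBY y yB)); rewrite j1.
  have := Lagrange (By_sub (setDP y0D).1); rewrite i1 -eB => e1 e2.
  by rewrite -(@leq_pmul2r p) ?prime_gt0 // e1 e2.
have e1 : \sum_(B in midS X Y p) #|B :\: X| = (#|midS X Y p| * (#|X| * p - #|X|))%N.
  rewrite -sum_nat_const; apply: eq_bigr => B BS.
  have sXB : X \subset B by case/midS_mem: BS => _ [y _ ->]; rewrite joing_subl.
  by rewrite cardsD (setIidPr sXB) midS_card_el.
have e2 : #|Y :\: X| = (#|X| * p ^ 2 - #|X|)%N.
  by rewrite cardsD (setIidPr sXY) -iYX Lagrange.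
apply: (@ar_count _ #|X|) => //; last exact: p_gt1.
by rewrite -e1 -part e2.
Qed.

End Count.


Lemma enum_groups (S : {set {set gT}}) n : #|S| = n ->
  (forall B : {set gT}, B \in S -> group_set B) ->
  exists Ai : 'I_n -> {group gT}, [set (Ai i : {set gT}) | i : 'I_n] = S.
Proof.
move=> eS gS.
pose f (i : 'I_n) : {set gT} := enum_val (cast_ord (esym eS) i).
have fS i : f i \in S by exact: enum_valP.
exists (fun i => Group (gS _ (fS i))).
apply/setP => B; apply/imsetP/idP => [[i _ ->] | BS] //=.
exists (cast_ord eS (enum_rank_in BS B)) => //=.
by rewrite /f cast_ordK enum_rankK_in.
Qed.

Lemma final_shape (X Y A : {group gT}) p (L : {set {set gT}}) :
  prime p -> X \subset 'Z(Y) -> #|Y : X| = (p ^ 2)%N -> ~~ abelian Y ->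
  L = (X : {set gT}) |: ((Y : {set gT}) |: midS X Y p) ->
  (A : {set gT}) \in midS X Y p ->
  exists Ai : 'I_p -> {group gT},
    [/\ L = [set (X : {set gT}); (A : {set gT}); (Y : {set gT})]
            :|: [set (Ai i : {set gT}) | i : 'I_p],
        quasi_antichain L p.+1 & forall i, abelian (Ai i)].
Proof.
move=> pr sXZ iYX nAY eL AS.
have sXY : X \subset Y := subset_trans sXZ (center_sub Y).
have p1 := prime_gt1 pr.
have cS := midS_card pr sXZ iYX nAY.
have cS' : #|midS X Y p :\ (A : {set gT})| = p.
  by move: cS; rewrite (cardsD1 (A : {set gT})) AS add1n => [[]].
have gS' : forall B : {set gT}, B \in midS X Y p :\ (A : {set gT}) -> group_set B.
  by move=> B /setD1P [_ BS]; case: (midS_mem pr sXZ iYX nAY BS).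
have [Ai eAi] := enum_groups cS' gS'.
have XnY : (X : {set gT}) != Y.
  apply/eqP => e; move: iYX; rewrite e indexgg => e1.
  by have [] := p_sq p1; rewrite -e1.
have XnS : (X : {set gT}) \notin midS X Y p.
  rewrite inE iYX; apply/negP => /and4P [_ _ _ /eqP e1].
  by have [_] := p_sq p1; rewrite e1 ltnn.
have YnS : (Y : {set gT}) \notin midS X Y p.
  rewrite inE indexgg; apply/negP => /and4P [_ _ _ /eqP e1].
  by move: p1; rewrite -e1.
exists Ai; split.
- rewrite eL eAi; apply/setP => W; rewrite !(in_setU1, in_setU, in_set1, in_setD1).
  case: (eqVneq W A) => [-> | ne] /=; first by rewrite AS !orbT.
  by case: (W == X); case: (W == Y).
- exists (X : {set gT}), (Y : {set gT}); split; [split | split].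
  + by rewrite eL !inE eqxx.
  + by rewrite eL !inE eqxx orbT.
  + exact: XnY.
  + move=> W; rewrite eL !in_setU1 => /orP [/eqP -> | /orP [/eqP -> | WS]].
    * by rewrite subxx sXY.
    * by rewrite sXY subxx.
    * by move: WS; rewrite inE => /and4P [_ -> -> _].
  + rewrite eL cardsU1 cardsU1 cS !in_setU1 (negbTE XnY) (negbTE XnS) (negbTE YnS) /=.
    by rewrite add1n add1n addn2.
  + move=> W1 W2; rewrite eL !in_setU1 => h1 h2 n1X n1Y n2X n2Y s12.
    move: h1 h2; rewrite (negbTE n1X) (negbTE n1Y) (negbTE n2X) (negbTE n2Y) /= => h1 h2.
    apply/eqP; rewrite eqEcard s12 /=.
    by rewrite (midS_card_el pr sXZ iYX nAY h1) (midS_card_el pr sXZ iYX nAY h2).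
- move=> i; apply: (midS_ab pr sXZ iYX nAY).
  have : (Ai i : {set gT}) \in midS X Y p :\ (A : {set gT}) by rewrite -eAi; apply/imsetP; exists i.
  by case/setD1P.
Qed.


Lemma mid_in (X Y B : {group gT}) p : prime p -> X \subset 'Z(Y) -> #|Y : X| = (p ^ 2)%N ->
  ~~ abelian Y -> X \subset B -> B \subset Y ->
  (B : {set gT}) != X -> (B : {set gT}) != Y -> (B : {set gT}) \in midS X Y p.
Proof.
move=> pr sXZ iYX nAY sXB sBY nBX nBY.
have [iB _] := mid_char pr sXZ iYX nAY sXB sBY nBX nBY.
by rewrite inE groupP sXB sBY iB eqxx.
Qed.

Lemma C_Z G : 'C_G('Z(G)) = G.
Proof. by apply/setIidPl; rewrite centsC subsetIr. Qed.

Lemma part2 G A p : prime p -> max_selfcent G A -> #|G : 'Z(G)| = (p ^ 2)%N ->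
  exists Ai : 'I_p -> {group gT},
    [/\ CD G = [set 'Z(G); (A : {set gT}); (G : {set gT})]
              :|: [set (Ai i : {set gT}) | i : 'I_p],
        quasi_antichain (CD G) p.+1 &
        forall i, abelian (Ai i)].
Proof.
move=> pr msA iZ.
have [sAG cA aA sZA] := selfcent_facts msA.
have p1 := prime_gt1 pr.
have [pp1 pp2] := p_sq p1.
have nAG : ~~ abelian G.
  apply/negP => aG.
  have : #|G : 'Z(G)| == 1%N by rewrite indexg_eq1 subsetI subxx -abelianE.
  by rewrite iZ => /eqP e1; move: pp1; rewrite e1.
have sZZ : 'Z(G)%G \subset 'Z(G) by [].
have eG : #|G| = (#|'Z(G)| * p ^ 2)%N by rewrite -iZ Lagrange // center_sub.
have cdZ : forall H : {group gT}, 'Z(G) \subset H -> H \subset G ->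
    cdm G H = (#|G| * #|'Z(G)|)%N.
  move=> H sZH sHG.
  case: (eqVneq (H : {set gT}) 'Z(G)) => [-> | nHZ]; first by rewrite /cdm C_Z mulnC.
  case: (eqVneq (H : {set gT}) G) => [-> | nHG]; first by rewrite /cdm.
  have HS := @mid_in 'Z(G)%G G H p pr sZZ iZ nAG sZH sHG nHZ nHG.
  have aH := midS_ab pr sZZ iZ nAG HS.
  have cH := midS_card_el pr sZZ iZ nAG HS.
  have sHC : H \subset 'C_G(H) by rewrite subsetI sHG.
  have prH : prime #|G : H| by move: HS; rewrite inE => /and4P [_ _ _ /eqP ->].
  have [eC|eC] := prime_idx_max sHC (subsetIl G _) prH.
    rewrite /cdm eC cH eG /=; ring.
  move: nHZ; rewrite eqEsubset sZH andbT => /negP; case.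
  by rewrite sub_Z // -{1}eC subsetIr.
have mx : cdmax G = (#|G| * #|'Z(G)|)%N.
  apply: cdmax_eq; last by exists G; rewrite ?subxx // cdZ ?subxx // center_sub.
  move=> H sHG; case sZH: ('Z(G) \subset H); first by rewrite cdZ.
  apply: ltnW; apply: leq_trans (cdm_Z sHG (negbT sZH)) _.
  by rewrite cdZ ?joing_subr // join_subG sHG center_sub.
have AS : (A : {set gT}) \in midS 'Z(G) G p.
  apply: (@mid_in 'Z(G)%G G A p) => //.
  - apply/eqP => e; move: cA; rewrite e C_Z => e2.
    by move: pp1; rewrite -iZ -e2 indexgg.
  - apply/eqP => e; move: cA; rewrite e => e2.
    have : #|G : 'Z(G)| == 1%N.
      by rewrite indexg_eq1; move: (subxx G); rewrite -{2}e2.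
    by rewrite iZ => /eqP e1; move: pp1; rewrite e1.
apply: (@final_shape 'Z(G)%G G A p) => //.
apply: CD_ext => [H sHG | W].
  rewrite mx !in_setU1.
  case sZH: ('Z(G) \subset H).
    rewrite cdZ // eqxx.
    case: (eqVneq (H : {set gT}) 'Z(G)) => //= nHZ.
    case: (eqVneq (H : {set gT}) G) => //= nHG.
    by rewrite (@mid_in 'Z(G)%G G H p pr sZZ iZ nAG).
  have lt := cdm_Z sHG (negbT sZH).
  rewrite (cdZ (H <*> 'Z(G))%G) ?joing_subr // ?join_subG ?sHG ?center_sub // in lt.
  rewrite (ltn_eqF lt).
  apply/esym/negbTE; rewrite negb_or; apply/andP; split.
    by apply: contra (negbT sZH) => /eqP ->.
  rewrite negb_or; apply/andP; split.
    by apply: contra (negbT sZH) => /eqP ->; rewrite center_sub.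
  by rewrite inE; apply/negP => /and4P [_ h _ _]; rewrite h in sZH.
rewrite !in_setU1 => /orP [/eqP -> | /orP [/eqP -> | ]].
- by rewrite groupP center_sub.
- by rewrite groupP subxx.
- by rewrite inE => /and4P [-> _ -> _].
Qed.

End CDL.


Section P4.
Variable gT : finGroupType.

Lemma center_prime_abelian (X : {group gT}) : prime #|X : 'Z(X)| -> abelian X.
Proof.
move=> pr; apply: cyclic_center_factor_abelian; apply: prime_cyclic.
by rewrite card_quotient ?normal_norm ?center_normal.
Qed.

Lemma Zcap (G H : {group gT}) : H \subset G -> 'Z(H) = H :&: 'C_G(H).
Proof. by move=> sHG; rewrite setIA (setIidPl sHG). Qed.

Lemma cdmax_Z (G : {group gT}) M :
  (forall H : {group gT}, 'Z(G) \subset H -> H \subset G -> cdm G H <= M) ->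
  (exists2 H : {group gT}, H \subset G & cdm G H = M) -> cdmax G = M.
Proof.
move=> hle hex; apply: cdmax_eq => // H sHG.
case sZH : ('Z(G) \subset H); first exact: hle.
apply: ltnW; apply: leq_trans (cdm_Z sHG (negbT sZH)) _.
by apply: hle; rewrite ?joing_subr // join_subG sHG center_sub.
Qed.

Lemma cdm_idx (G H : {group gT}) : H \subset G ->
  (cdm G H * (#|G : H| * #|G : 'C_G(H)|) = #|G| * #|G|)%N.
Proof.
move=> sHG; rewrite /cdm -{1}(Lagrange sHG) -(Lagrange (subsetIl G 'C(H))); ring.
Qed.

Lemma cdm_GZ (G : {group gT}) :
  cdm G G = (#|G| * #|'Z(G)|)%N /\ cdm G 'Z(G) = (#|G| * #|'Z(G)|)%N.
Proof. by split; rewrite /cdm // C_Z mulnC. Qed.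

Lemma GZ_idx (G : {group gT}) : (#|G| * #|'Z(G)| * #|G : 'Z(G)| = #|G| * #|G|)%N.
Proof. by rewrite -mulnA (Lagrange (center_sub G)). Qed.

Lemma CD_extZ (G : {group gT}) M (L : {set {set gT}}) : cdmax G = M ->
  (forall H : {group gT}, 'Z(G) \subset H -> H \subset G ->
     (cdm G H == M) = ((H : {set gT}) \in L)) ->
  (forall X : {set gT}, X \in L -> [&& group_set X, X \subset G & 'Z(G) \subset X]) ->
  CD G = L.
Proof.
move=> mx hP hL; apply: CD_ext => [H sHG | X /hL /and3P [-> -> _] //].
case sZH : ('Z(G) \subset H); first by rewrite mx hP.
apply/idP/idP => [/eqP e | /hL /and3P [_ _ s]]; last by rewrite s in sZH.
by rewrite (CD_Z sHG e) in sZH.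
Qed.

Lemma meet_join_CD (G H K : {group gT}) : H \subset G -> K \subset G ->
  cdm G H = cdmax G -> cdm G K = cdmax G ->
  cdm G (H :&: K) = cdmax G /\ cdm G (H <*> K) = cdmax G.
Proof.
move=> sHG sKG eH eK.
have li := cdm_meet_join sHG sKG; rewrite eH eK in li.
have l1 : cdm G (H :&: K)%G <= cdmax G by apply: cdm_le; rewrite subIset ?sHG.
have l2 : cdm G (H <*> K)%G <= cdmax G by apply: cdm_le; rewrite join_subG sHG sKG.
have M0 : 0 < cdmax G.
  by apply: leq_trans (cdm_le sHG); rewrite /cdm muln_gt0 !cardG_gt0.
split; apply/eqP; rewrite eqn_leq ?l1 ?l2 /=.
  by rewrite -(leq_pmul2r M0) (leq_trans li) // leq_mul2l l2 orbT.
by rewrite -(leq_pmul2l M0) (leq_trans li) // leq_mul2r l1 orbT.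
Qed.

Lemma CD_build (G : {group gT}) M (L : {set {set gT}}) : cdmax G = M ->
  (forall X, X \in L -> exists H : {group gT},
       [/\ X = (H : {set gT}), H \subset G & cdm G H = M]) ->
  (forall H : {group gT}, 'Z(G) \subset H -> H \subset G -> cdm G H = M ->
       (H : {set gT}) \in L) ->
  CD G = L.
Proof.
move=> mx hL hH; apply: CD_ext => [H sHG | X XL].
  apply/idP/idP => [/eqP e | HL].
    by apply: hH => //; [apply: CD_Z sHG e | rewrite -mx].
  have [H' [eH' _ c]] := hL _ HL.
  have -> : cdm G H = cdm G H' by rewrite /cdm eH'.
  by rewrite c mx.
by have [H' [-> s _]] := hL _ XL; rewrite groupP s.
Qed.

Lemma idx_eq_sub (G X Y : {group gT}) : X \subset Y -> Y \subset G ->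
  #|G : X| = #|G : Y| -> (X : {set gT}) = Y.
Proof.
move=> sXY sYG e; apply/eqP; rewrite eqEcard sXY /=.
have e1 := Lagrange (subset_trans sXY sYG); have e2 := Lagrange sYG.
by rewrite -(leq_pmul2r (indexg_gt0 G X)) e1 e e2.
Qed.

Lemma in_T (G T H : {group gT}) : T \subset G -> prime #|G : T| ->
  cdm G T = cdmax G -> H \subset G -> cdm G H = cdmax G -> cdm G G < cdmax G ->
  H \subset T.
Proof.
move=> sTG prT cT sHG cH lt; apply/negPn/negP => nHT.
have sJ : T <*> H \subset G by rewrite join_subG sTG sHG.
have [e|e] := prime_idx_max (joing_subl T H) sJ prT.
  by have := joing_subr T H; rewrite e (negbTE nHT).
have [_ cJ] := meet_join_CD sTG sHG cT cH.
by move: lt; rewrite -cJ /cdm e ltnn.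
Qed.

Variables (G A : {group gT}) (p : nat).
Hypotheses (pr_p : prime p) (msA : max_selfcent G A) (iA : #|G : A| = (p ^ 2)%N)
  (hU : forall q, prime q -> q %| #|G : 'Z(G)| -> p <= q).

Lemma abel_idx (B : {group gT}) : B \subset G -> abelian B -> (p ^ 2 <= #|G : B|)%N.
Proof.
move=> sBG aB; have le := abelian_le msA sBG aB.
have [sAG _ _ _] := selfcent_facts msA.
have e1 := Lagrange sBG; have e2 := Lagrange sAG; rewrite iA in e2.
by rewrite -(leq_pmul2l (cardG_gt0 B)) e1 -e2 leq_mul2r le orbT.
Qed.

Lemma sZC (H : {group gT}) : H \subset G -> 'Z(G) \subset 'C_G(H).
Proof.
move=> sHG; rewrite subsetI center_sub /=.
exact: subset_trans (subsetIr G 'C(G)) (centS sHG).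
Qed.

Lemma core (H : {group gT}) : 'Z(G) \subset H -> H \subset G ->
  (H : {set gT}) != 'Z(G) -> (H : {set gT}) != G ->
  (p ^ 4 <= #|G : H| * #|G : 'C_G(H)|)%N /\
  (#|G : H| * #|G : 'C_G(H)| = p ^ 4 ->
   [\/ [/\ abelian H, 'C_G(H) = H & #|G : H| = p ^ 2],
       [/\ #|G : H| = p, 'C_G(H) = 'Z(H) & #|G : 'Z(H)| = p ^ 3],
       [/\ #|G : 'C_G(H)| = p, (H : {set gT}) = 'Z('C_G(H)) & #|G : 'Z('C_G(H))| = p ^ 3] |
       [/\ #|G : H| = p ^ 2, #|G : 'C_G(H)| = p ^ 2 & #|G : 'Z(G)| = p ^ 4]])%N.
Proof.
move=> sZH sHG nHZ nHG.
have p0 := prime_gt0 pr_p; have p1 := prime_gt1 pr_p.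
have p20 : (0 < p ^ 2)%N by rewrite expn_gt0 p0.
have pp0 : (0 < p * p)%N by rewrite muln_gt0 p0.
have p4 : (p ^ 4 = p ^ 2 * p ^ 2)%N by rewrite -expnD.
have p4' : (p ^ 4 = p * p * p ^ 2)%N by rewrite -mulnA -!expnS.
have p3 : (p ^ 3 = p * p ^ 2)%N by rewrite -expnS.
have p2 : (p ^ 2 = p * p)%N by rewrite (expnS p 1) expn1.
have sKG : 'C_G(H) \subset G := subsetIl _ _.
have sZK := sZC sHG.
have nGH : ~~ (G \subset H).
  by apply: contra nHG => sGH; rewrite eqEsubset sHG sGH.
have nHZ' : ~~ (H \subset 'Z(G)).
  by apply: contra nHZ => s; rewrite eqEsubset s sZH.
have nGK : ~~ (G \subset 'C_G(H)).
  by apply: contra nHZ' => s; rewrite sub_Z // (subset_trans s) ?subsetIr.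
have hp : (p <= #|G : H|)%N := idx_ge pr_p hU sZH sHG (subxx G) nGH.
have kp : (p <= #|G : 'C_G(H)|)%N := idx_ge pr_p hU sZK sKG (subxx G) nGK.
case sKH : ('C_G(H) \subset H).
  have eZH : 'Z(H) = 'C_G(H) by rewrite (Zcap sHG) (setIidPr sKH).
  case aH : (abelian H).
    have eKH : 'C_G(H) = H.
      by apply/eqP; rewrite eqEsubset sKH subsetI sHG -abelianE aH.
    have h2 := abel_idx sHG aH.
    rewrite eKH; split; first by rewrite p4 leq_mul.
    move=> e; constructor 1; split=> //.
    by apply: sq_eq h2 _ p20; rewrite e p4.
  have x2 := NA pr_p hU sZH sHG (negbT aH).
  have ek : #|G : 'C_G(H)| = (#|G : H| * #|H : 'Z(H)|)%N.
    by rewrite -eZH (Lagrange_index sHG (center_sub H)).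
  rewrite ek mulnA; split; first by rewrite p4' leq_mul // leq_mul.
  move=> e; rewrite p4' in e.
  have [hh xx] := eq_prod (leq_mul hp hp) x2 e pp0 p20.
  have hpe := sq_eq hp hh p0.
  constructor 2; split=> //.
  by rewrite -(Lagrange_index sHG (center_sub H)) hpe xx p3.
case aH : (abelian H).
  have sHK : H \subset 'C_G(H) by rewrite subsetI sHG -abelianE.
  have sHZK : H \subset 'Z('C_G(H)).
    by rewrite subsetI sHK centsC subsetIr.
  have yp := idx_ge pr_p hU sZH sHK sKG (negbT sKH).
  have eh := Lagrange_index sKG sHK.
  case aK : (abelian 'C_G(H)).
    have k2 := abel_idx sKG aK.
    have lt : (p ^ 4 < #|G : H| * #|G : 'C_G(H)|)%N.
      have le : (p ^ 2 * p * p ^ 2 <= #|G : 'C_G(H)| * #|'C_G(H) : H| * #|G : 'C_G(H)|)%N.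
        by rewrite leq_mul // leq_mul.
      rewrite eh in le; apply: leq_trans le.
      rewrite p4 ltn_pmul2r // -{1}[(p ^ 2)%N]muln1 ltn_pmul2l //.
    by split; [exact: ltnW | move=> e; rewrite e ltnn in lt].
  have x2 := NA pr_p hU sZK sKG (negbT aK).
  have ey := Lagrange_index (center_sub 'C_G(H)) sHZK.
  have w1 := indexg_gt0 'Z('C_G(H)) H.
  have y2 : (p ^ 2 <= #|'C_G(H) : H|)%N.
    by rewrite -ey (leq_trans x2) // leq_pmulr.
  have ehk : (#|G : H| * #|G : 'C_G(H)| = #|G : 'C_G(H)| * #|G : 'C_G(H)| * #|'C_G(H) : H|)%N.
    by rewrite -eh mulnAC.
  rewrite ehk; split; first by rewrite p4' leq_mul // leq_mul.
  move=> e; rewrite p4' in e.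
  have [kk yy] := eq_prod (leq_mul kp kp) y2 e pp0 p20.
  have kpe := sq_eq kp kk p0.
  have [_ ww] := eq_prod x2 w1 (etrans ey (etrans yy (esym (muln1 _)))) p20 (ltn0Sn 0).
  have eHZ : (H : {set gT}) = 'Z('C_G(H)).
    by apply/eqP; rewrite eqEsubset sHZK -indexg_eq1 ww.
  constructor 3; split=> //.
  by rewrite -eHZ -eh kpe yy p3.
have x2 := NA pr_p hU sZH sHG (negbT aH).
have cKH : 'C_G(H) \subset 'C(H) := subsetIr _ _.
have sJG : H <*> 'C_G(H) \subset G by rewrite join_subG sHG sKG.
have eJ : H <*> 'C_G(H) = H * 'C_G(H) := cent_joinEr cKH.
have mc := mul_cardG H 'C_G(H).
rewrite -(Zcap sHG) in mc.
have sZHC : 'Z(H) \subset 'C(H <*> 'C_G(H)).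
  rewrite centY subsetI subsetIr /= centsC.
  exact: subset_trans cKH (centS (center_sub H)).
have eH := Lagrange sHG; have eK := Lagrange sKG.
have sZHG : 'Z(H) \subset G := subset_trans (center_sub H) sHG.
have ZHZ : (H <*> 'C_G(H) : {set gT}) = G -> 'Z(H) = 'Z(G).
  move=> eJG; apply/eqP; rewrite eqEsubset (Z_sub_center sZH sHG) andbT.
  by rewrite subsetI sZHG -eJG sZHC.
case prh : (prime #|G : H|).
  exfalso.
  have [e | eJG] := prime_idx_max (joing_subl H 'C_G(H)) sJG prh.
    by have := joing_subr H 'C_G(H); rewrite e sKH.
  have eZ := ZHZ eJG.
  have cHK : #|H * 'C_G(H)| = #|G| by rewrite -eJ eJG.
  rewrite cHK eZ in mc.
  have eK2 : #|'C_G(H)| = (#|G : H| * #|'Z(G)|)%N.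
    by apply/eqP; rewrite -(eqn_pmul2l (cardG_gt0 H)) mc mulnA eH.
  have sZZK := Z_sub_center sZK sKG.
  have eKZ : #|'C_G(H) : 'Z(G)| = #|G : H|.
    apply/eqP; rewrite -(eqn_pmul2l (cardG_gt0 'Z(G))) (Lagrange sZK) eK2 mulnC //.
  have dv : #|'C_G(H) : 'Z('C_G(H))| %| #|G : H|.
    by rewrite -eKZ -(Lagrange_index (center_sub _) sZZK) dvdn_mulr.
  have aK : abelian 'C_G(H).
    case/primeP: (prh) => _ /(_ _ dv) /orP [/eqP i1 | /eqP ih].
      move/eqP: i1; rewrite indexg_eq1 => s.
      by rewrite abelianE (subset_trans s) // subsetIr.
    by apply: center_prime_abelian; rewrite ih.
  have sKZ : 'C_G(H) \subset 'Z(G).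
    rewrite subsetI sKG /=.
    have : 'C_G(H) \subset 'C(H <*> 'C_G(H)).
      by rewrite centY subsetI cKH -abelianE aK.
    by rewrite eJG.
  have : #|'C_G(H) : 'Z(G)| == 1%N by rewrite indexg_eq1.
  by rewrite eKZ => /eqP e1; move: prh; rewrite e1.
have h2 : (p ^ 2 <= #|G : H|)%N.
  rewrite leqNgt; apply/negP => lt; move: prh.
  rewrite (U_prime pr_p hU (idx_dvd sZH sHG (subxx G)) (leq_trans p1 hp) lt) //.
have le1 : #|H * 'C_G(H)| <= #|G| by rewrite subset_leq_card // mul_subG.
have eGZH := Lagrange sZHG.
have eGZH2 := Lagrange_index sHG (center_sub H).
have key : (#|G| * #|G| = #|(H * 'C_G(H))%g| * #|'Z(H)| * (#|G : H| * #|G : 'C_G(H)|))%N.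
  by rewrite -mc -{1}eH -eK; ring.
have key2 : (#|G : H| * #|H : 'Z(H)| <= #|G : H| * #|G : 'C_G(H)|)%N.
  rewrite -(leq_pmul2l (cardG_gt0 'Z(H))) eGZH2 eGZH -(leq_pmul2l (cardG_gt0 G)).
  by rewrite key mulnA -!mulnA leq_mul2r le1 orbT.
split.
  by apply: leq_trans key2; rewrite p4 leq_mul.
move=> e.
have le3 : (#|G : H| * #|H : 'Z(H)| <= p ^ 2 * p ^ 2)%N by rewrite -p4 -e key2.
have e3 : (#|G : H| * #|H : 'Z(H)| = p ^ 2 * p ^ 2)%N.
  by apply/eqP; rewrite eqn_leq le3 leq_mul.
have [hh xx] := eq_prod h2 x2 e3 p20 p20.
have kk : #|G : 'C_G(H)| = (p ^ 2)%N.
  by apply/eqP; rewrite -(eqn_pmul2l p20) -{1}hh e p4.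
have cHK : #|H * 'C_G(H)| = #|G|.
  apply/eqP; rewrite eqn_leq le1 /=.
  have : (#|G| * #|G| <= #|(H * 'C_G(H))%g| * #|G|)%N.
    by rewrite key -eGZH -eGZH2 hh kk xx; apply: eq_leq; ring.
  by rewrite leq_mul2r (negbTE (lt0n_neq0 (cardG_gt0 G))).
have eHK : (H * 'C_G(H) : {set gT}) = G.
  by apply/eqP; rewrite eqEcard mul_subG // cHK leqnn.
have eZ := ZHZ (etrans eJ eHK).
constructor 4; split=> //.
by rewrite -eZ -eGZH2 hh xx p4.
Qed.

Lemma eGA : #|G| = (#|A| * p ^ 2)%N.
Proof. by have [sAG _ _ _] := selfcent_facts msA; rewrite -iA Lagrange. Qed.

Lemma cdm_A : cdm G A = (#|A| * #|A|)%N.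
Proof. by have [_ cA _ _] := selfcent_facts msA; rewrite /cdm cA. Qed.

Lemma GG4 : (#|G| * #|G| = #|A| * #|A| * p ^ 4)%N.
Proof. rewrite eGA (_ : 4 = 2 + 2)%N // expnD; ring. Qed.

Lemma bound_core (H : {group gT}) : 'Z(G) \subset H -> H \subset G ->
  (H : {set gT}) != 'Z(G) -> (H : {set gT}) != G ->
  cdm G H <= #|A| * #|A| /\
  (cdm G H = #|A| * #|A| <-> #|G : H| * #|G : 'C_G(H)| = p ^ 4)%N.
Proof.
move=> sZH sHG nHZ nHG.
have [le _] := core sZH sHG nHZ nHG.
have e := cdm_idx sHG; rewrite GG4 in e.
have p40 : (0 < p ^ 4)%N by rewrite expn_gt0 prime_gt0.
split.
  rewrite -(leq_pmul2r p40) -e leq_mul2l le orbT //.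
split => [ec | ek].
  by move: e; rewrite ec => /eqP; rewrite eqn_pmul2l ?muln_gt0 ?cardG_gt0 // => /eqP.
by move: e; rewrite ek => /eqP; rewrite eqn_pmul2r // => /eqP.
Qed.

Lemma cdmax4 : (p ^ 4 <= #|G : 'Z(G)|)%N -> cdmax G = (#|A| * #|A|)%N.
Proof.
move=> le4.
have [sAG _ _ _] := selfcent_facts msA.
have p40 : (0 < p ^ 4)%N by rewrite expn_gt0 prime_gt0.
have hGZ : (#|G| * #|'Z(G)| <= #|A| * #|A|)%N.
  rewrite -(leq_pmul2r p40) -GG4 -(GZ_idx G) leq_mul2l le4 orbT //.
apply: cdmax_Z; last by exists A; rewrite ?cdm_A.
move=> H sZH sHG.
case: (eqVneq (H : {set gT}) 'Z(G)) => [-> | nHZ]; first by have [_ ->] := cdm_GZ G.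
case: (eqVneq (H : {set gT}) G) => [-> | nHG]; first by have [-> _] := cdm_GZ G.
by case: (bound_core sZH sHG nHZ nHG).
Qed.

Lemma part4a : (#|G : 'Z(G)| < p ^ 4)%N -> CD G = [set 'Z(G); (G : {set gT})].
Proof.
move=> lt4.
have gz0 : (0 < #|G| * #|'Z(G)|)%N by rewrite muln_gt0 !cardG_gt0.
have lt : forall H : {group gT}, 'Z(G) \subset H -> H \subset G ->
    (H : {set gT}) != 'Z(G) -> (H : {set gT}) != G -> (cdm G H < #|G| * #|'Z(G)|)%N.
  move=> H sZH sHG nHZ nHG; rewrite ltnNge; apply/negP => le.
  have [c4 _] := core sZH sHG nHZ nHG.
  have := leq_mul le c4; rewrite cdm_idx // -(GZ_idx G) leq_mul2l (negbTE (lt0n_neq0 gz0)) /=.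
  by rewrite leqNgt lt4.
have mx : cdmax G = (#|G| * #|'Z(G)|)%N.
  apply: cdmax_Z; last by exists G; rewrite ?subxx //; case: (cdm_GZ G).
  move=> H sZH sHG.
  case: (eqVneq (H : {set gT}) 'Z(G)) => [-> | nHZ]; first by have [_ ->] := cdm_GZ G.
  case: (eqVneq (H : {set gT}) G) => [-> | nHG]; first by have [-> _] := cdm_GZ G.
  exact: ltnW (lt H sZH sHG nHZ nHG).
apply: (CD_extZ mx) => [H sZH sHG | X].
  rewrite !inE.
  case: (eqVneq (H : {set gT}) 'Z(G)) => [-> | nHZ].
    by have [_ ->] := cdm_GZ G; rewrite !eqxx.
  case: (eqVneq (H : {set gT}) G) => [-> | nHG].
    by have [-> _] := cdm_GZ G; rewrite !eqxx orbT.
  by rewrite ltn_eqF // lt.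
rewrite !inE => /orP [/eqP -> | /eqP ->].
  by rewrite groupP center_sub subxx.
by rewrite groupP subxx center_sub.
Qed.

Lemma Tfacts (T : {group gT}) : T \subset G -> #|G : T| = p -> #|G : 'Z(T)| = (p ^ 3)%N ->
  (p ^ 4 <= #|G : 'Z(G)|)%N ->
  [/\ 'C_G(T) = 'Z(T), 'C_G('Z(T)) = T, cdm G T = (#|A| * #|A|)%N,
      cdm G 'Z(T) = (#|A| * #|A|)%N &
      [/\ ~~ abelian T, #|T : 'Z(T)| = (p ^ 2)%N & ~~ ('Z(T) \subset 'Z(G))]].
Proof.
move=> sTG iT iZT le4.
have p0 := prime_gt0 pr_p; have p1 := prime_gt1 pr_p.
have prT : prime #|G : T| by rewrite iT.
have sZTG : 'Z(T) \subset G := subset_trans (center_sub T) sTG.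
have nZ : ~~ ('Z(T) \subset 'Z(G)).
  apply/negP => s; have := dvdn_leq (indexg_gt0 _ _) (indexgS G s).
  rewrite iZT => le3; have := leq_trans le4 le3.
  by rewrite leq_exp2l // ltnn.
have eCZ : 'C_G('Z(T)) = T.
  have sTC : T \subset 'C_G('Z(T)) by rewrite subsetI sTG centsC subsetIr.
  have [//|e] := prime_idx_max sTC (subsetIl _ _) prT.
  by move: nZ; rewrite sub_Z // -{1}e subsetIr.
have eCT : 'C_G(T) = 'Z(T).
  case sCT : ('C_G(T) \subset T); first by rewrite (Zcap sTG) (setIidPr sCT).
  have sJ : T <*> 'C_G(T) \subset G by rewrite join_subG sTG subsetIl.
  have [e|e] := prime_idx_max (joing_subl T 'C_G(T)) sJ prT.
    by have := joing_subr T 'C_G(T); rewrite e sCT.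
  case/negP: nZ; rewrite subsetI sZTG /= -e centY subsetI subsetIr /=.
  rewrite centsC; apply: subset_trans (subsetIr G _) (centS (center_sub T)).
have eT := Lagrange sTG; have eZT := Lagrange sZTG.
rewrite iT in eT; rewrite iZT in eZT.
have eTZ := Lagrange_index sTG (center_sub T); rewrite iT iZT in eTZ.
have iTZ : #|T : 'Z(T)| = (p ^ 2)%N.
  by apply/eqP; rewrite -(eqn_pmul2l p0) eTZ -expnS.
have cdT : (#|T| * #|'Z(T)| = #|A| * #|A|)%N.
  apply/eqP; rewrite -(eqn_pmul2r (_ : 0 < p ^ 4)%N) ?expn_gt0 ?p0 // -GG4.
  by rewrite -{1}eT -eZT (_ : 4 = 1 + 3)%N // expnD expn1; apply/eqP; ring.
split.
- exact: eCT.
- exact: eCZ.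
- by rewrite /cdm eCT.
- by rewrite /cdm eCZ mulnC.
split=> //.
  apply/negP => aT; move: iTZ; rewrite (_ : 'Z(T) = T) ?indexgg.
    by move=> e1; have [h _] := p_sq p1; move: h; rewrite -e1.
  by apply/setIidPl; rewrite -abelianE.
Qed.

Lemma midT (T : {group gT}) (B : {group gT}) :
  T \subset G -> #|G : T| = p -> #|G : 'Z(T)| = (p ^ 3)%N ->
  (p ^ 4 <= #|G : 'Z(G)|)%N ->
  (B : {set gT}) \in midS 'Z(T) T p ->
  [/\ 'C_G(B) = B, #|G : B| = (p ^ 2)%N, abelian B & cdm G B = (#|A| * #|A|)%N].
Proof.
move=> sTG iT iZT le4 BS.
have p0 := prime_gt0 pr_p.
have [_ _ _ _ [nAT iTZ _]] := Tfacts sTG iT iZT le4.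
have sZ : 'Z(T) \subset 'Z(T) := subxx _.
have cB := @midS_card_el _ 'Z(T)%G T p pr_p sZ iTZ nAT _ BS.
have aB := @midS_ab _ 'Z(T)%G T p pr_p sZ iTZ nAT _ BS.
have sBT : B \subset T by move: BS; rewrite inE => /and4P [_ _ -> _].
have sBG := subset_trans sBT sTG.
have eZT := Lagrange (subset_trans (center_sub T) sTG); rewrite iZT in eZT.
have eB : #|B| = #|A|.
  apply/eqP; rewrite -(eqn_pmul2r (_ : 0 < p ^ 2)%N) ?expn_gt0 ?p0 // -eGA -eZT cB.
  by rewrite (_ : 3 = 1 + 2)%N // expnD expn1 mulnA.
have iB : #|G : B| = (p ^ 2)%N.
  apply/eqP; rewrite -(eqn_pmul2l (cardG_gt0 B)) (Lagrange sBG) eB -eGA //.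
have mx := cdmax4 le4.
have sBC : B \subset 'C_G(B) by rewrite subsetI sBG -abelianE.
have le := cdm_le sBG; rewrite mx /cdm eB leq_mul2l (negbTE (lt0n_neq0 (cardG_gt0 A))) /= in le.
have eC : 'C_G(B) = B.
  by apply/esym/eqP; rewrite eqEcard sBC eB.
by split=> //; rewrite /cdm eC eB.
Qed.

Lemma part4b : #|G : 'Z(G)| = (p ^ 4)%N ->
  CD G = 'Z(G) |: [set 'Z(T) | T in Tsubs G p]
         :|: ((A : {set gT}) |: Asubs G A p) :|: Tsubs G p :|: [set (G : {set gT})] /\
  (1 <= #|Tsubs G p| -> p <= #|Asubs G A p|)%N.
Proof.
move=> i4.
have le4 : (p ^ 4 <= #|G : 'Z(G)|)%N by rewrite i4.
have mx := cdmax4 le4.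
have [sAG cA aA sZA] := selfcent_facts msA.
have p0 := prime_gt0 pr_p; have p1 := prime_gt1 pr_p.
have p40 : (0 < p ^ 4)%N by rewrite expn_gt0 p0.
have eGZ : (#|G| * #|'Z(G)| = #|A| * #|A|)%N.
  by apply/eqP; rewrite -(eqn_pmul2r p40) -GG4 -i4 GZ_idx.
have [cG cZ] := cdm_GZ G.
have p4 : (p ^ 4 = p ^ 2 * p ^ 2)%N by rewrite -expnD.
have p3 : (p ^ 3 = p * p ^ 2)%N by rewrite -expnS.
split.
  apply: (CD_build mx) => [X | H sZH sHG cH].
    rewrite !(in_setU, in_setU1, in_set1) => /orP [/orP [/orP [/orP [/eqP -> | ] | ] | ] | ].
    - by exists 'Z(G)%G; rewrite /= center_sub cZ eGZ.
    - case/imsetP => T; rewrite inE => /and4P [gT' sTG /eqP iT /eqP iZT] ->.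
      have [_ _ _ cZT _] := @Tfacts (Group gT') sTG iT iZT le4.
      exists ('Z(Group gT'))%G; split=> //.
      exact: subset_trans (center_sub _) sTG.
    - case/orP => [/eqP -> | ]; first by exists A; rewrite sAG cdm_A.
      rewrite inE => /and5P [gB sBG _ /eqP iB /eqP iC].
      exists (Group gB); split=> //.
      have e := @cdm_idx G (Group gB) sBG; rewrite GG4 iB iC -p4 in e.
      by apply/eqP; rewrite -(eqn_pmul2r p40) e.
    - rewrite inE => /and4P [gT' sTG /eqP iT /eqP iZT].
      have [_ _ cT _ _] := @Tfacts (Group gT') sTG iT iZT le4.
      by exists (Group gT').
    - by move/eqP ->; exists G; split; rewrite ?subxx ?cG ?eGZ.
  rewrite !(in_setU, in_setU1, in_set1).
  case: (eqVneq (H : {set gT}) 'Z(G)) => [-> | nHZ]; first by rewrite /= ?orbT.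
  case: (eqVneq (H : {set gT}) G) => [-> | nHG]; first by rewrite !orbT.
  have [_ [hk _]] := bound_core sZH sHG nHZ nHG.
  have [_ cls] := core sZH sHG nHZ nHG.
  have inAs : #|G : H| = (p ^ 2)%N -> #|G : 'C_G(H)| = (p ^ 2)%N ->
      ((H : {set gT}) == A) || ((H : {set gT}) \in Asubs G A p).
    move=> i1 i2; case: (eqVneq (H : {set gT}) A) => //= nHA.
    by rewrite inE groupP sHG nHA i1 i2 !eqxx.
  case: (cls (hk cH)) => [[aH eC iH] | [iH eC iZH] | [iK eH iZK] | [iH iK _]].
  - by rewrite inAs ?eC ?iH ?orbT.
  - by apply/orP; left; apply/orP; right; rewrite inE groupP sHG iH iZH !eqxx.
  - apply/orP; left; apply/orP; left; apply/orP; left; apply/orP; right.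
    apply/imsetP; exists ('C_G(H) : {set gT}) => //.
    by rewrite inE groupP subsetIl iK iZK !eqxx.
  - by rewrite inAs ?orbT.
move=> /card_gt0P [T0 TS].
move: TS; rewrite inE => /and4P [gT' sTG /eqP iT /eqP iZT].
set T := Group gT'.
have [_ _ _ _ [nAT iTZ _]] := @Tfacts T sTG iT iZT le4.
have sZ : 'Z(T) \subset 'Z(T) := subxx _.
have cS := @midS_card _ 'Z(T)%G T p pr_p sZ iTZ nAT.
have sub : midS 'Z(T) T p \subset (A : {set gT}) |: Asubs G A p.
  apply/subsetP => B BS.
  have [gB _] := midS_mem pr_p sZ iTZ nAT BS.
  have BS' : (Group gB : {set gT}) \in midS 'Z(T) T p by [].
  have [eC iB _ _] := @midT T (Group gB) sTG iT iZT le4 BS'.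
  have sBG : B \subset G.
    by move: BS; rewrite inE => /and4P [_ _ s _]; exact: subset_trans s sTG.
  rewrite in_setU1; case: (eqVneq B A) => //= nBA.
  by rewrite inE gB sBG nBA -[B]/(Group gB : {set gT}) iB eC iB !eqxx.
have := subset_leq_card sub; rewrite cardsU1 cS => h.
have b1 : (nat_of_bool ((A : {set gT}) \notin Asubs G A p) <= 1)%N.
  by case: (_ \notin _).
lia.
Qed.

Lemma cdm_small : (p ^ 4 < #|G : 'Z(G)|)%N ->
  (cdm G G < #|A| * #|A|)%N /\ (cdm G 'Z(G) < #|A| * #|A|)%N.
Proof.
move=> lt4; have [-> ->] := cdm_GZ G.
suff h : (#|G| * #|'Z(G)| < #|A| * #|A|)%N by [].
rewrite ltnNge; apply/negP => le.
have := leq_mul le lt4; rewrite GZ_idx GG4.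
by rewrite leq_pmul2l ?muln_gt0 ?cardG_gt0 // ltnn.
Qed.

Lemma neq_idx (X Y : {set gT}) : #|G : X| != #|G : Y| -> X != Y.
Proof. by apply: contra => /eqP ->. Qed.

Lemma pows : [/\ (p ^ 2 != p ^ 3)%N, (p ^ 2 != p)%N & (p != p ^ 3)%N].
Proof.
have p1 := prime_gt1 pr_p; have p0 := prime_gt0 pr_p.
split; [by rewrite eqn_exp2l | by rewrite -{2}[p]expn1 eqn_exp2l | by rewrite -{1}[p]expn1 eqn_exp2l].
Qed.

Lemma part4c (T : {group gT}) : (p ^ 4 < #|G : 'Z(G)|)%N ->
  T \subset G -> #|G : T| = p -> #|G : 'Z(T)| = (p ^ 3)%N ->
  exists Ai : 'I_p -> {group gT},
    [/\ CD G = [set 'Z(T); (A : {set gT}); (T : {set gT})]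
                :|: [set (Ai j : {set gT}) | j : 'I_p],
        quasi_antichain (CD G) p.+1 &
        forall j, abelian (Ai j)].
Proof.
move=> lt4 sTG iT iZT.
have le4 := ltnW lt4.
have mx := cdmax4 le4.
have [sAG cA aA sZA] := selfcent_facts msA.
have [cGl cZl] := cdm_small lt4.
have [eCT eCZ cT cZT [nAT iTZ nZ]] := Tfacts sTG iT iZT le4.
have prT : prime #|G : T| by rewrite iT.
have sZ : 'Z(T) \subset 'Z(T) := subxx _.
have sZTG : 'Z(T) \subset G := subset_trans (center_sub T) sTG.
have [n23 n21 n13] := pows.
have p1 := prime_gt1 pr_p.
have cTm : cdm G T = cdmax G by rewrite mx.
have cGm : cdm G G < cdmax G by rewrite mx.
have eL : CD G = 'Z(T) |: ((T : {set gT}) |: midS 'Z(T) T p).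
  apply: (CD_build mx) => [X | H sZH sHG cH].
    rewrite !in_setU1 => /orP [/eqP -> | /orP [/eqP -> | XS]].
    - by exists 'Z(T)%G.
    - by exists T.
    - have [gX _] := midS_mem pr_p sZ iTZ nAT XS.
      have XS' : (Group gX : {set gT}) \in midS 'Z(T) T p by [].
      have [_ _ _ cX] := @midT T (Group gX) sTG iT iZT le4 XS'.
      exists (Group gX); split=> //.
      by move: XS; rewrite inE => /and4P [_ _ s _]; exact: subset_trans s sTG.
  have nHZ : (H : {set gT}) != 'Z(G).
    apply/eqP => e; have e' : cdm G H = cdm G 'Z(G) by rewrite /cdm e.
    by move: cZl; rewrite -e' cH ltnn.
  have nHG : (H : {set gT}) != G.
    apply/eqP => e; have e' : cdm G H = cdm G G by rewrite /cdm e.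
    by move: cGl; rewrite -e' cH ltnn.
  have [_ [hk _]] := bound_core sZH sHG nHZ nHG.
  have [_ cls] := core sZH sHG nHZ nHG.
  have cHm : cdm G H = cdmax G by rewrite mx.
  have sHT := in_T sTG prT cTm sHG cHm cGm.
  rewrite !in_setU1.
  case: (cls (hk cH)) => [[aH eC iH] | [iH eC iZH] | [iK eH iZK] | [_ _ i4]].
  - have sZTH : 'Z(T) \subset H.
      rewrite -eC subsetI sZTG /=.
      exact: subset_trans (subsetIr T _) (centS sHT).
    rewrite (@mid_in _ 'Z(T)%G T H p pr_p sZ iTZ nAT sZTH sHT) ?orbT //.
      by apply: neq_idx; rewrite iH iZT.
    by apply: neq_idx; rewrite iH iT.
  - by rewrite (idx_eq_sub sHT sTG) ?iH ?iT // eqxx orbT.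
  - have sKG : 'C_G(H) \subset G := subsetIl _ _.
    have [_ _ cK _ _] := @Tfacts 'C_G(H)%G sKG iK iZK le4.
    have cKm : cdm G 'C_G(H) = cdmax G by rewrite mx.
    have sKT := in_T sTG prT cTm sKG cKm cGm.
    have eKT := idx_eq_sub sKT sTG (etrans iK (esym iT)).
    by rewrite eH /= eKT eqxx.
  - by move: lt4; rewrite i4 ltnn.
have AS : (A : {set gT}) \in midS 'Z(T) T p.
  have : (A : {set gT}) \in CD G by rewrite CD_mem // cdm_A mx.
  rewrite eL !in_setU1 => /orP [/eqP e | /orP [/eqP e | //]].
    by move: iA; rewrite e iZT => /eqP; rewrite eq_sym (negbTE n23).
  by move: iA; rewrite e iT => /eqP; rewrite eq_sym (negbTE n21).
exact: (@final_shape _ 'Z(T)%G T A p (CD G) pr_p sZ iTZ nAT eL AS).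
Qed.

Lemma part4d : (p ^ 4 < #|G : 'Z(G)|)%N ->
  ~ (exists T : {group gT}, [/\ T \subset G, #|G : T| = p & #|G : 'Z(T)| = (p ^ 3)%N]) ->
  CD G = [set (A : {set gT})].
Proof.
move=> lt4 noT.
have le4 := ltnW lt4.
have mx := cdmax4 le4.
have [sAG cA aA sZA] := selfcent_facts msA.
have [cGl cZl] := cdm_small lt4.
have typeA : forall H : {group gT}, 'Z(G) \subset H -> H \subset G ->
    cdm G H = (#|A| * #|A|)%N -> #|G : H| = (p ^ 2)%N.
  move=> H sZH sHG cH.
  have nHZ : (H : {set gT}) != 'Z(G).
    apply/eqP => e; have e' : cdm G H = cdm G 'Z(G) by rewrite /cdm e.
    by move: cZl; rewrite -e' cH ltnn.
  have nHG : (H : {set gT}) != G.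
    apply/eqP => e; have e' : cdm G H = cdm G G by rewrite /cdm e.
    by move: cGl; rewrite -e' cH ltnn.
  have [_ [hk _]] := bound_core sZH sHG nHZ nHG.
  have [_ cls] := core sZH sHG nHZ nHG.
  case: (cls (hk cH)) => [[aH eC iH] | [iH eC iZH] | [iK eH iZK] | [_ _ i4]] //.
  - by case: noT; exists H.
  - by case: noT; exists 'C_G(H)%G; rewrite subsetIl.
apply: (CD_build mx) => [X | H sZH sHG cH].
  by rewrite inE => /eqP ->; exists A; rewrite sAG cdm_A.
have cHm : cdm G H = cdmax G by rewrite mx.
have cAm : cdm G A = cdmax G by rewrite mx cdm_A.
have [cI _] := meet_join_CD sHG sAG cHm cAm.
have sIG : (H :&: A)%G \subset G by rewrite subIset ?sHG.
have sZI : 'Z(G) \subset (H :&: A)%G by rewrite subsetI sZH sZA.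
have iI := typeA _ sZI sIG (etrans cI mx).
have iH := typeA _ sZH sHG cH.
have e1 := idx_eq_sub (subsetIl H A) sHG (etrans iI (esym iH)).
have e2 := idx_eq_sub (subsetIr H A) sAG (etrans iI (esym iA)).
by rewrite inE -e1 e2.
Qed.

End P4.


Lemma hU_pow (gT : finGroupType) (G : {group gT}) p i : prime p ->
  #|G : 'Z(G)| = (p ^ i)%N -> forall q, prime q -> q %| #|G : 'Z(G)| -> p <= q.
Proof.
move=> pr e q prq; rewrite e Euclid_dvdX // => /andP [qp _].
case/primeP: pr => _ /(_ q qp) /orP [/eqP q1 | /eqP -> //].
by move: (prime_gt1 prq); rewrite q1.
Qed.

Lemma hU_spd (gT : finGroupType) (G : {group gT}) p : smallest_prime_div p #|G| ->
  forall q, prime q -> q %| #|G : 'Z(G)| -> p <= q.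
Proof.
case=> _ _ h q prq d; apply: h => //; exact: dvdn_trans d (dvdn_indexg _ _).
Qed.

Unset Implicit Arguments.

Theorem theorem2p1 (gT : finGroupType) (G A : {group gT}) (p : nat) :
  prime p -> max_selfcent G A ->
  (* 1 *)
  (abelian G -> CD G = [set (G : {set gT})]) /\
  (* 2 *)
  (#|G : 'Z(G)| = (p ^ 2)%N ->
     exists Ai : 'I_p -> {group gT},
       [/\ CD G = [set 'Z(G); (A : {set gT}); (G : {set gT})]
                   :|: [set (Ai i : {set gT}) | i : 'I_p],
           quasi_antichain (CD G) p.+1 &
           forall i, abelian (Ai i)]) /\
  (* 3 *)
  ((forall i, 2 < i -> #|G : A| = p -> #|G : 'Z(G)| = (p ^ i)%N ->
      CD G = [set (A : {set gT})]) /\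
   (smallest_prime_div p #|G| -> #|G : A| = p -> (p ^ 2)%N < #|G : 'Z(G)| ->
      CD G = [set (A : {set gT})])) /\
  (* 4 *)
  (#|G : A| = (p ^ 2)%N ->
   (* 4a *)
   ((#|G : 'Z(G)| = (p ^ 3)%N -> CD G = [set 'Z(G); (G : {set gT})]) /\
    (smallest_prime_div p #|G| -> (p ^ 2)%N < #|G : 'Z(G)| < (p ^ 4)%N ->
       CD G = [set 'Z(G); (G : {set gT})])) /\
   (* 4b *)
   (#|G : 'Z(G)| = (p ^ 4)%N ->
      CD G = 'Z(G) |: [set 'Z(T) | T in Tsubs G p]
             :|: ((A : {set gT}) |: Asubs G A p) :|: Tsubs G p :|: [set (G : {set gT})] /\
      (1 <= #|Tsubs G p| -> p <= #|Asubs G A p|)) /\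
   (* 4c *)
   ((forall i (T : {group gT}), 4 < i -> #|G : 'Z(G)| = (p ^ i)%N ->
       T \subset G -> #|G : T| = p -> #|G : 'Z(T)| = (p ^ 3)%N ->
       exists Ai : 'I_p -> {group gT},
         [/\ CD G = [set 'Z(T); (A : {set gT}); (T : {set gT})]
                     :|: [set (Ai j : {set gT}) | j : 'I_p],
             quasi_antichain (CD G) p.+1 &
             forall j, abelian (Ai j)]) /\
    (forall T : {group gT}, smallest_prime_div p #|G| -> (p ^ 4)%N < #|G : 'Z(G)| ->
       T \subset G -> #|G : T| = p -> #|G : 'Z(T)| = (p ^ 3)%N ->
       exists Ai : 'I_p -> {group gT},
         [/\ CD G = [set 'Z(T); (A : {set gT}); (T : {set gT})]
                     :|: [set (Ai j : {set gT}) | j : 'I_p],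
             quasi_antichain (CD G) p.+1 &
             forall j, abelian (Ai j)])) /\
   (* 4d *)
   ((forall i, 4 < i -> #|G : 'Z(G)| = (p ^ i)%N ->
       ~ (exists T : {group gT},
            [/\ T \subset G, #|G : T| = p & #|G : 'Z(T)| = (p ^ 3)%N]) ->
       CD G = [set (A : {set gT})]) /\
    (smallest_prime_div p #|G| -> (p ^ 4)%N < #|G : 'Z(G)| ->
       ~ (exists T : {group gT},
            [/\ T \subset G, #|G : T| = p & #|G : 'Z(T)| = (p ^ 3)%N]) ->
       CD G = [set (A : {set gT})]))).
Proof.
move=> pr msA.
have p1 := prime_gt1 pr.
split; first exact: part1.
split; first exact: part2.
split.
  split.
    move=> i lt2 iA iZ.
    have lt : (p ^ 2 < #|G : 'Z(G)|)%N by rewrite iZ ltn_exp2l.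
    exact: part3 pr msA iA lt.
  by move=> _ iA lt; exact: part3 pr msA iA lt.
move=> iA.
split.
  split.
    move=> iZ; have lt : (#|G : 'Z(G)| < p ^ 4)%N by rewrite iZ ltn_exp2l.
    exact: (part4a pr msA iA (hU_pow pr iZ) lt).
  move=> spd /andP [_ lt]; exact: (part4a pr msA iA (hU_spd spd)).
split.
  move=> iZ; exact: (part4b pr msA iA (hU_pow pr iZ)).
split.
  split.
    move=> i T lt4 iZ; have lt : (p ^ 4 < #|G : 'Z(G)|)%N by rewrite iZ ltn_exp2l.
    exact: (part4c pr msA iA (hU_pow pr iZ) lt).
  by move=> T spd lt; exact: (part4c pr msA iA (hU_spd spd) lt).
split.
  move=> i lt4 iZ; have lt : (p ^ 4 < #|G : 'Z(G)|)%N by rewrite iZ ltn_exp2l.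
  exact: (part4d pr msA iA (hU_pow pr iZ) lt).
by move=> spd lt; exact: (part4d pr msA iA (hU_spd spd) lt).
Qed.
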